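(* Let $d\ge2$, $\xi>0$, let $\sigma:\xi\mathbb{Z}^d\to\mathbb{R}$ be a generalized mass configuration and let $R_1>0$ be such that $\operatorname{supp}\sigma\subset\hat B_{R_1}$. Then for every $R_2>R_1+\xi$, $$\operatorname{GDS}_{R_2}(\operatorname{GDS}_{R_1}(\sigma))=\operatorname{GDS}_{R_2}(\sigma).$$
   Context: A generalized mass configuration on $\xi\mathbb{Z}^d$ is a bounded function with finite support. $\hat B_R:=B(0,R)\cap\xi\mathbb{Z}^d$. Neighbours $y'\sim y$ are lattice points at distance $\xi$; $\Delta f(y)=\frac{1}{2d\xi^2}\sum_{y'\sim y}(f(y')-f(y))$; toppling at $x$ is $T_x\eta(y):=\eta(y)+\eta_+(x)\xi^2\Delta\delta_x(y)$ (if $\eta(x)>0$, remove the mass $\eta(x)$ from $x$ and add $\eta(x)/(2d)$ to each neighbour; otherwise do nothing). For a generalized mass configuration $\tau$ with $\operatorname{supp}\tau\subset\hat B_R$, $\operatorname{GDS}_R(\tau)$ is the pointwise limit of the configurations obtained from $\tau$ by successively toppling at the points of a sequence in $\hat B_R$ in which every point of $\hat B_R$ occurs infinitely often; this limit exists, does not depend on the sequence, is supported in $\hat B_R\cup\partial\hat B_R$ (where $\partial S=\{y\notin S:\exists y'\in S,\ y\sim y'\}$), and equals $-\Delta v$ where $v(x)=\sup\{f(x):\Delta f\ge0\text{ in }\hat B_R,\ f\le U^\tau\text{ in }\xi\mathbb{Z}^d\}$, $U^\tau$ being the discrete potential of $\tau$ (satisfying $-\Delta U^\tau=\tau$). *)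

(* Defs.v *)
From HB Require Import structures.
From mathcomp Require Import all_boot all_order all_algebra.
From mathcomp Require Import all_classical all_reals all_analysis.
Set Implicit Arguments. Unset Strict Implicit. Unset Printing Implicit Defensive.
Import Order.TTheory GRing.Theory Num.Theory.
Import numFieldNormedType.Exports.
Local Open Scope ring_scope.
Local Open Scope classical_set_scope.

(* The lattice xi Z^d is parametrised by Z^d: the integer vector k stands for
   the lattice point xi * k. *)
Definition pt (d : nat) := 'rV[int]_d.

Definition evec (d : nat) (i : 'I_d) : pt d := delta_mx 0 i.

(* (squared) Euclidean norm of the lattice point xi*k is xi^2 * sum k_i^2 *)
Definition sqnorm (R : realType) (d : nat) (k : pt d) : R :=
  \sum_(i < d) ((k 0 i)%:~R) ^+ 2.

Definition inBall (R : realType) (d : nat) (xi Rad : R) (k : pt d) : Prop :=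
  xi ^+ 2 * sqnorm R k < Rad ^+ 2.

Definition dlap (R : realType) (d : nat) (xi : R) (f : pt d -> R) (y : pt d) : R :=
  (2 * d%:R * xi ^+ 2)^-1 *
  \sum_(i < d) ((f (y + evec i) - f y) + (f (y - evec i) - f y)).

Definition dirac (R : realType) (d : nat) (x : pt d) : pt d -> R :=
  fun y => if y == x then 1 else 0.

Definition topple (R : realType) (d : nat) (xi : R) (x : pt d) (eta : pt d -> R)
  : pt d -> R :=
  fun y => eta y + Num.max (eta x) 0 * (xi ^+ 2 * dlap xi (dirac R x) y).

Fixpoint topple_seq (R : realType) (d : nat) (xi : R) (s : nat -> pt d)
  (tau : pt d -> R) (n : nat) : pt d -> R :=
  match n with
  | 0 => tau
  | n.+1 => topple xi (s n) (topple_seq xi s tau n)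
  end.

Definition exhaustive_seq (R : realType) (d : nat) (xi Rad : R) (s : nat -> pt d)
  : Prop :=
  (forall n, inBall xi Rad (s n)) /\
  (forall x, inBall xi Rad x -> forall N : nat, exists2 n : nat, (N <= n)%N & s n = x).

Definition topple_limit (R : realType) (d : nat) (xi : R) (s : nat -> pt d)
  (tau eta : pt d -> R) : Prop :=
  forall y, (fun n => topple_seq xi s tau n y) @ \oo --> eta y.

Definition gen_mass_config (R : realType) (d : nat) (tau : pt d -> R) : Prop :=
  (exists M : R, forall y, `|tau y| <= M) /\
  (exists supp : seq (pt d), forall y, tau y != 0 -> y \in supp).

(* Main.v *)
Require Import Defs.
From HB Require Import structures.
From mathcomp Require Import all_boot all_order all_algebra.
From mathcomp Require Import all_classical all_reals all_analysis.
From mathcomp Require Import ring lra zify.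
Set Implicit Arguments. Unset Strict Implicit. Unset Printing Implicit Defensive.
Import Order.TTheory GRing.Theory Num.Theory.
Import numFieldNormedType.Exports.
Local Open Scope ring_scope.
Local Open Scope classical_set_scope.

Section S.
Variables (R : realType) (d : nat).

Definition Lop (f : pt d -> R) (y : pt d) : R :=
  (2 * d%:R)^-1 * \sum_(i < d) ((f (y + evec i) - f y) + (f (y - evec i) - f y)).

Lemma dlapE (xi : R) f y : (0 < d)%N -> 0 < xi -> xi ^+ 2 * dlap xi f y = Lop f y.
Proof.
move=> d0 xi0; have : (d%:R : R) != 0 by rewrite pnatr_eq0 -lt0n.
move=> ?; rewrite /dlap /Lop; set S := \sum_(i < d) _.
have : xi != 0 by rewrite gt_eqF.
move=> ?; field; apply/andP; split => //.

Qed.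

Lemma toppleE (xi : R) x eta y : (0 < d)%N -> 0 < xi ->
  topple xi x eta y = eta y + Num.max (eta x) 0 * Lop (Defs.dirac R x) y.
Proof. by move=> d0 xi0; rewrite /topple dlapE. Qed.

Lemma Lop_lin f g c y : Lop (fun z => f z + c * g z) y = Lop f y + c * Lop g y.
Proof.
rewrite /Lop mulrCA -mulrDr; congr (_ * _); rewrite mulr_sumr -big_split.
apply: eq_bigr => i _ /=.
move: (f (y + evec i)) (f y) (f (y - evec i)) (g (y + evec i)) (g y) (g (y - evec i)) => *.
ring.
Qed.

Lemma evec_neq0 (i : 'I_d) : evec i != 0.
Proof. by apply/eqP => /matrixP /(_ 0 i); rewrite !mxE !eqxx. Qed.

Lemma addevec_neq (x : pt d) i : (x + evec i == x) = false.
Proof.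
apply/negbTE/eqP => h; move/eqP: (evec_neq0 i); apply.
by apply: (addrI x); rewrite addr0.
Qed.

Lemma subevec_neq (x : pt d) i : (x - evec i == x) = false.
Proof.
apply/negbTE/eqP => h; move/eqP: (evec_neq0 i); apply.
by apply/eqP; rewrite -oppr_eq0; apply/eqP; apply: (addrI x); rewrite addr0.
Qed.

Lemma Lop_dirac_self x : (0 < d)%N -> Lop (Defs.dirac R x) x = -1.
Proof.
move=> d0; rewrite /Lop /Defs.dirac eqxx.
under eq_bigr do rewrite addevec_neq subevec_neq.
rewrite sumr_const card_ord -mulr_natr.
have : (d%:R : R) != 0 by rewrite pnatr_eq0 -lt0n.
move=> dn; field; by rewrite dn.
Qed.

Lemma Lop_ge0_min u y : (forall z, u y <= u z) -> 0 <= Lop u y.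
Proof.
move=> h; rewrite /Lop mulr_ge0 ?invr_ge0 ?mulr_ge0 ?ler0n //.
by apply: sumr_ge0 => i _; rewrite addr_ge0 // subr_ge0.
Qed.

Lemma Lop_max w x i : (forall z, w z <= w x) -> 0 <= Lop w x ->
  w (x + evec i) = w x.
Proof.
move=> hm; rewrite /Lop => h.
have d0 : (0 < d)%N by case: i => /= ? ?; lia.
have hinv : 0 < (2 * d%:R : R)^-1 by rewrite invr_gt0 mulr_gt0 // ltr0n.
have hS : 0 <= \sum_(j < d) ((w (x + evec j) - w x) + (w (x - evec j) - w x)).
  by rewrite -(pmulr_rge0 _ hinv).
have hS' : \sum_(j < d) - ((w (x + evec j) - w x) + (w (x - evec j) - w x)) = 0.
  apply/eqP; rewrite eq_le; apply/andP; split.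
    by rewrite sumrN oppr_le0.
  by apply: sumr_ge0 => j _; have := hm (x + evec j); have := hm (x - evec j); lra.
have H0 : forall j : 'I_d, true -> 0 <= - ((w (x + evec j) - w x) + (w (x - evec j) - w x)).
  by move=> j _; have := hm (x + evec j); have := hm (x - evec j); lra.
have := psumr_eq0P H0 hS' (i := i) isT.
have := hm (x + evec i); have := hm (x - evec i).
move=> ? ? ?; lra.
Qed.

Lemma sq_step (x : pt d) (i : 'I_d) :
  sqnorm R (x + evec i) + sqnorm R (x - evec i) = 2 * sqnorm R x + 2.
Proof.
rewrite /sqnorm -big_split mulr_sumr /=.
rewrite [X in _ = _ + X](_ : 2 = \sum_(j < d) (if j == i then 2 else 0 : R)); last first.
  by rewrite -big_mkcond big_pred1_eq.
rewrite -big_split; apply: eq_bigr => j _ /=; rewrite /evec !mxE eqxx /=.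
case: (j == i) => /=; rewrite ?addr0 ?subr0 ?intrD ?intrB; move: ((x 0 j)%:~R : R) => a; ring.
Qed.

Lemma sum_pick (F : seq (pt d)) (g : pt d -> R) a : uniq F -> a \in F ->
  \sum_(y <- F) g y * (if y == a then 1 else 0) = g a.
Proof.
move=> uF aF; rewrite (bigD1_seq a) //= eqxx mulr1 big1 ?addr0 //.
by move=> y /negbTE ->; rewrite mulr0.
Qed.

Lemma wsum (F : seq (pt d)) x : (0 < d)%N -> uniq F ->
  (forall i, x + evec i \in F) -> (forall i, x - evec i \in F) -> x \in F ->
  \sum_(y <- F) sqnorm R y * Lop (Defs.dirac R x) y = 1.
Proof.
move=> d0 uF hp hm hx.
under eq_bigr do rewrite /Lop mulrCA mulr_sumr.
rewrite -mulr_sumr exchange_big /=.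
transitivity ((2 * d%:R)^-1 * \sum_(i < d) (2 : R)); last first.
  rewrite sumr_const card_ord -mulr_natr.
  have : (d%:R : R) != 0 by rewrite pnatr_eq0 -lt0n.
  by move=> dn; field; rewrite dn.
congr (_ * _); apply: eq_bigr => i _.
have E1 y : Defs.dirac R x (y + evec i) = if y == x - evec i then 1 else 0.
  rewrite /Defs.dirac; congr (if _ then _ else _).
  by apply/eqP/eqP => [<-|->]; [rewrite addrK | rewrite subrK].
have E2 y : Defs.dirac R x (y - evec i) = if y == x + evec i then 1 else 0.
  rewrite /Defs.dirac; congr (if _ then _ else _).
  by apply/eqP/eqP => [<-|->]; [rewrite subrK | rewrite addrK].
transitivity ((\sum_(y <- F) sqnorm R y * (if y == x - evec i then 1 else 0)
   - \sum_(y <- F) sqnorm R y * (if y == x then 1 else 0)) +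
   (\sum_(y <- F) sqnorm R y * (if y == x + evec i then 1 else 0)
   - \sum_(y <- F) sqnorm R y * (if y == x then 1 else 0))).
  rewrite -!sumrB -big_split; apply: eq_bigr => y _.
  rewrite E1 E2 /Defs.dirac.
  move: (sqnorm R y) (if y == x - evec i then 1 else 0 : R) (if y == x + evec i then 1 else 0 : R)
    (if y == x then 1 else 0 : R) => *; by rewrite mulrDr !mulrBr.
rewrite !sum_pick //.
have := sq_step x i; lra.
Qed.

Definition box (N : nat) : seq (pt d) :=
  [seq \row_j ((nat_of_ord (g j))%:Z - N%:Z)
     | g : {ffun 'I_d -> 'I_(2 * N).+1} <- enum {ffun 'I_d -> 'I_(2 * N).+1}].

Lemma in_box N (k : pt d) : (forall j, `|k 0 j| <= N%:Z) -> k \in box N.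
Proof.
move=> hk; apply/mapP.
exists [ffun j => inord (absz (k 0 j + N%:Z))]; first by rewrite mem_enum.
apply/matrixP => a j; rewrite !mxE ffunE (ord1 a).
have := hk j => hj.
rewrite inordK.
  rewrite abszE ger0_norm; first by rewrite addrK.
  lia.
lia.
Qed.

Lemma ball_box (xi Rad : R) (N : nat) (k : pt d) : 0 < xi -> 0 < Rad ->
  Rad <= xi * N%:R -> inBall xi Rad k -> forall j, `|k 0 j| <= N%:Z.
Proof.
move=> xi0 R0 hN; rewrite /inBall /sqnorm => hb j.
have h1 : ((k 0 j)%:~R : R) ^+ 2 <= \sum_(i < d) ((k 0 i)%:~R : R) ^+ 2.
  by rewrite (bigD1 j) //= lerDl sumr_ge0 // => *; exact: sqr_ge0.
have h2 : ((k 0 j)%:~R : R) ^+ 2 < (N%:R) ^+ 2.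
  have hx2 : 0 < xi ^+ 2 by rewrite exprn_gt0.
  rewrite -(ltr_pM2l hx2).
  apply: (le_lt_trans (ler_wpM2l (ltW hx2) h1)); apply: (lt_le_trans hb).
  rewrite -exprMn !expr2; nra.
have : ((k 0 j) ^+ 2)%:~R < ((N%:Z) ^+ 2)%:~R :> R by rewrite !rmorphXn.
rewrite ltr_int !expr2 => h; nia.
Qed.

Lemma box_nbr N (x : pt d) i : (forall j, `|x 0 j| <= N%:Z) ->
  (forall j, `|(x + evec i) 0 j| <= N.+1%:Z) /\ (forall j, `|(x - evec i) 0 j| <= N.+1%:Z).
Proof.
move=> H; split => j; rewrite /evec !mxE eqxx /=; have := H j; case: (j == i) => /=; lia.
Qed.

Lemma iter_coord (x : pt d) i n :
  (iter n (fun z => z + evec i) x) 0 i = x 0 i + n%:Z.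
Proof.
elim: n => [|n IH] /=; first by rewrite addr0.
by rewrite !mxE IH /evec ?mxE !eqxx /=; lia.
Qed.

Lemma lim_le_io (f : nat -> R) y c : f @ \oo --> y ->
  (forall N, exists2 n, (N <= n)%N & f n <= c) -> y <= c.
Proof.
move=> fy h; rewrite leNgt; apply/negP => cy.
have [N _ HN] := cvgr_gt _ fy _ cy.
have [n Nn fn] := h N; have := HN n Nn; rewrite /=; lra.
Qed.

Lemma lim_ge_io (f : nat -> R) y c : f @ \oo --> y ->
  (forall N, exists2 n, (N <= n)%N & c <= f n) -> c <= y.
Proof.
move=> fy h; rewrite leNgt; apply/negP => cy.
have [N _ HN] := cvgr_lt _ fy _ cy.
have [n Nn fn] := h N; have := HN n Nn; rewrite /=; lra.
Qed.

Lemma lim_uniq (f : nat -> R) (a b : R) : f @ \oo --> a -> f @ \oo --> b -> a = b.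
Proof. by move=> ha hb; apply: (cvg_unique _ ha hb). Qed.

Lemma cvg_seqsum (I : Type) (r : seq I) (f : I -> nat -> R) (l : I -> R) :
  (forall i, f i @ \oo --> l i) ->
  (fun n => \sum_(i <- r) f i n) @ \oo --> \sum_(i <- r) l i.
Proof.
move=> h; elim: r => [|i r IH].
  rewrite big_nil; under eq_cvg do rewrite big_nil; exact: cvg_cst.
rewrite big_cons; under eq_cvg do rewrite big_cons.
exact: cvgD.
Qed.

Lemma Lop_cvg (f : nat -> pt d -> R) g y :
  (forall z, (fun n => f n z) @ \oo --> g z) ->
  (fun n => Lop (f n) y) @ \oo --> Lop g y.
Proof.
move=> h; rewrite /Lop; apply: cvgMl_tmp.
apply: (cvg_seqsum (f := fun i n => (f n (y + evec i) - f n y) + (f n (y - evec i) - f n y))).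
by move=> i; apply: cvgD; apply: cvgB.
Qed.

Definition Sol (Bp : pt d -> Prop) (tau u eta : pt d -> R) : Prop :=
  [/\ (forall x, 0 <= u x), (forall x, ~ Bp x -> u x = 0),
      (forall y, eta y = tau y + Lop u y), (forall x, Bp x -> eta x <= 0)
    & (forall x, 0 < u x -> 0 <= eta x)].

Lemma Lop0 y : Lop (fun _ => 0) y = 0.
Proof. by rewrite /Lop big1 ?mulr0 // => i _; rewrite !subrr addr0. Qed.

Lemma sol_of_topple (xi Rad : R) (F : seq (pt d)) s tau eta :
  (0 < d)%N -> 0 < xi -> uniq F ->
  (forall x, inBall xi Rad x ->
     [/\ x \in F, forall i, x + evec i \in F & forall i, x - evec i \in F]) ->
  exhaustive_seq xi Rad s -> topple_limit xi s tau eta ->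
  exists u, Sol (inBall xi Rad) tau u eta.
Proof.
move=> d0 xi0 uF hF [sB sIO] hlim.
pose et := topple_seq xi s tau.
pose c n := Num.max (et n (s n)) 0.
have c0 n : 0 <= c n by rewrite /c le_max lexx orbT.
have etS n y : et n.+1 y = et n y + c n * Lop (Defs.dirac R (s n)) y.
  by rewrite /et /= toppleE.
pose odo n z := \sum_(m < n) (if s m == z then c m else 0).
have odoS n z : odo n.+1 z = odo n z + c n * Defs.dirac R (s n) z.
  rewrite /odo big_ord_recr /=; congr (_ + _).
  by rewrite /Defs.dirac (eq_sym z); case: ifP => _; rewrite ?mulr1 ?mulr0.
have etE n y : et n y = tau y + Lop (odo n) y.
  elim: n y => [|n IH] y.
    have -> : odo 0%N = (fun _ => 0) by apply: funext => z; rewrite /odo big_ord0.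
    by rewrite Lop0 addr0.
  rewrite etS IH.
  have -> : odo n.+1 = (fun z => odo n z + c n * Defs.dirac R (s n) z).
    by apply: funext => z; rewrite odoS.
  by rewrite Lop_lin addrA.
pose W n := \sum_(y <- F) sqnorm R y * et n y.
have WS n : W n.+1 = W n + c n.
  rewrite /W; under eq_bigr do rewrite etS mulrDr.
  rewrite big_split /=; congr (_ + _).
  under eq_bigr do rewrite mulrCA.
  have [h1 h2 h3] := hF _ (sB n).
  by rewrite -mulr_sumr wsum ?mulr1.
have Wl : W @ \oo --> \sum_(y <- F) sqnorm R y * eta y.
  apply: (cvg_seqsum (f := fun y n => sqnorm R y * et n y)) => y.
  by apply: cvgMl_tmp; apply: hlim.
set Wlim := \sum_(y <- F) sqnorm R y * eta y in Wl.
have Wle n m : (n <= m)%N -> W n <= W m.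
  move=> /subnK <-; elim: (m - n)%N => [|k IH]; first by rewrite add0n.
  by rewrite addSn WS; have := c0 (k + n)%N; lra.
have WB n : W n <= Wlim.
  apply: (lim_ge_io Wl) => N; exists (maxn N n); first exact: leq_maxl.
  by apply: Wle; exact: leq_maxr.
have odoB n z : odo n z <= Wlim - W 0%N.
  have -> : W 0%N = W n - \sum_(m < n) c m.
    elim: n {WB} => [|n IH]; first by rewrite big_ord0 subr0.
    by rewrite WS big_ord_recr /= IH; ring.
  have := WB n; have : odo n z <= \sum_(m < n) c m.
    by apply: ler_sum => m _; case: ifP => _ //.
  lra.
have odo0 n z : 0 <= odo n z.
  by apply: sumr_ge0 => m _; case: ifP.
have odoND z : nondecreasing_seq (fun n => odo n z).
  apply/nondecreasing_seqP => n; rewrite odoS.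
  have : 0 <= c n * Defs.dirac R (s n) z.
    by rewrite mulr_ge0 // /Defs.dirac; case: ifP.
  lra.
pose u z := sup (range (fun n => odo n z)).
have Hu z : (fun n => odo n z) @ \oo --> u z.
  apply: nondecreasing_cvgn => //; exists (Wlim - W 0%N) => _ [n _ <-]; exact: odoB.
exists u; split.
- move=> x; apply: (lim_ge_io (Hu x)) => N; exists N => //.
- move=> x hx; apply/eqP; rewrite eq_le; apply/andP; split.
    apply: (lim_le_io (Hu x)) => N; exists N => //.
    rewrite le_eqVlt; apply/orP; left; apply/eqP; apply: big1 => m _.
    by case: eqP => // E; exfalso; apply: hx; rewrite -E.
  apply: (lim_ge_io (Hu x)) => N; exists N => //.
- move=> y; apply: (@lim_uniq (fun n => et n y)); first exact: hlim.
  under eq_cvg do rewrite etE.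
  apply: cvgD; first exact: cvg_cst.
  exact: Lop_cvg.
- move=> x hx; apply: (lim_le_io (hlim x)) => N.
  have [m Nm smx] := sIO x hx N.
  exists m.+1; first by apply: leqW.
  change (et m.+1 x <= 0); rewrite etS smx Lop_dirac_self // /c smx.
  by rewrite mulrN1 subr_le0 le_max lexx.
- move=> x ux.
  have [n hn] : exists n, 0 < odo n x.
    case: (pselect (exists n, 0 < odo n x)) => // H; exfalso.
    have : u x <= 0.
      apply: (lim_le_io (Hu x)) => N; exists N => //.
      by rewrite leNgt; apply/negP => h; apply: H; exists N.
    lra.
  have [m [mn smx cm]] : exists m, [/\ (m < n)%N, s m = x & 0 < c m].
    case: (pselect (exists m, [/\ (m < n)%N, s m = x & 0 < c m])) => // H; exfalso.
    have : odo n x <= 0.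
      apply: sumr_le0 => m _; case: eqP => // E.
      rewrite leNgt; apply/negP => h; apply: H; exists m; split => //.
    lra.
  have step k : 0 <= et (k + m.+1)%N x.
    elim: k => [|k IH].
      change (0 <= et m.+1 x); rewrite etS smx Lop_dirac_self // mulrN1.
      move: cm; rewrite /c smx lt_max ltxx orbF => cm.
      by rewrite max_l ?subrr // ltW.
    rewrite addSn etS.
    case: (eqVneq (s (k + m.+1)%N) x) => [E|E].
      rewrite E Lop_dirac_self // mulrN1 /c E max_l //.
      by rewrite subrr.
    apply: addr_ge0 => //; apply: mulr_ge0 => //.
    apply: Lop_ge0_min => z; rewrite /Defs.dirac.
    rewrite eq_sym in E; rewrite (negbTE E); by case: ifP.
  apply: (lim_ge_io (hlim x)) => N.
  exists (N + m.+1)%N; first exact: leq_addr.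
  exact: (step N).
Qed.

Lemma argmax (F : seq (pt d)) (f : pt d -> R) a : a \in F ->
  exists2 z, z \in F & forall y, y \in F -> f y <= f z.
Proof.
elim: F a => [//|b F IH] a _.
case: F IH => [|b' F'] IH.
  by exists b; rewrite ?mem_head // => y; rewrite inE => /eqP ->.
have [z' zF zm] := IH b' (mem_head _ _).
case: (leP (f b) (f z')) => h.
  exists z'; first by rewrite inE zF orbT.
  by move=> y; rewrite inE => /orP [/eqP ->|/zm].
exists b; first exact: mem_head.
move=> y; rewrite inE => /orP [/eqP ->//|/zm hy]; exact: (le_trans hy (ltW h)).
Qed.

Lemma sol_uniq (Bp : pt d -> Prop) (F : seq (pt d)) (i0 : 'I_d) tau u u' eta eta' :
  (forall x, Bp x -> x \in F) ->
  (forall x, exists n, ~ Bp (iter n (fun z => z + evec i0) x)) ->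
  Sol Bp tau u eta -> Sol Bp tau u' eta' -> forall x, u x <= u' x.
Proof.
move=> hF hW [u0 uO uE uN uP] [u0' uO' uE' uN' uP'] x.
rewrite leNgt; apply/negP => hx.
pose w z := u z - u' z.
have Bx : Bp x.
  case: (pselect (Bp x)) => // nB; move: hx; by rewrite uO // uO' // ltxx.
have [z zF zmax] := argmax w (hF _ Bx).
have wx : 0 < w x by rewrite /w subr_gt0.
have gmax y : w y <= w z.
  case: (pselect (Bp y)) => hy; first exact: zmax (hF _ hy).
  have -> : w y = 0 by rewrite /w uO // uO' // subrr.
  have := zmax _ (hF _ Bx); lra.
have wz0 : 0 < w z by have := gmax x; lra.
have key y : w y = w z -> w (y + evec i0) = w z.
  move=> wy.
  have uy : u' y < u y by move: wz0; rewrite -wy /w subr_gt0.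
  have By : Bp y.
    case: (pselect (Bp y)) => // nB; move: uy; by rewrite uO // uO' // ltxx.
  have e1 : 0 <= eta y by apply: uP; exact: (le_lt_trans (u0' y) uy).
  have e2 := uN' y By.
  have hw : w = (fun z => u z + (-1) * u' z).
    by apply: funext => z0; rewrite /w mulN1r.
  have hL : 0 <= Lop w y.
    rewrite hw Lop_lin; move: e1 e2; rewrite uE uE'; lra.
  rewrite -wy; apply: Lop_max => // z0; rewrite wy; exact: gmax.
have all n : w (iter n (fun z0 => z0 + evec i0) z) = w z.
  by elim: n => [//|n IH] /=; apply: key.
have [n hn] := hW z.
move: (all n) wz0; rewrite /w uO // uO' // subrr => <-; by rewrite ltxx.
Qed.
End S.

Theorem proposition3p9 (R : realType) (d : nat) (xi R1 R2 : R)
  (sigma : pt d -> R) (s1 s2 s3 : nat -> pt d) (eta1 eta2 eta3 : pt d -> R) :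
  (2 <= d)%N -> 0 < xi ->
  gen_mass_config sigma ->
  0 < R1 ->
  (forall y, sigma y != 0 -> inBall xi R1 y) ->
  R1 + xi < R2 ->
  (* eta1 = GDS_{R1}(sigma) *)
  exhaustive_seq xi R1 s1 -> topple_limit xi s1 sigma eta1 ->
  (* eta2 = GDS_{R2}(eta1) *)
  exhaustive_seq xi R2 s2 -> topple_limit xi s2 eta1 eta2 ->
  (* eta3 = GDS_{R2}(sigma) *)
  exhaustive_seq xi R2 s3 -> topple_limit xi s3 sigma eta3 ->
  eta2 = eta3.
Proof.
move=> d2 xi0 _ R10 _ R12 ex1 l1 ex2 l2 ex3 l3.
have d0 : (0 < d)%N by lia.
have R20 : 0 < R2 by lra.
have R1le : R1 <= R2 by lra.
pose N := Num.bound (R2 / xi).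
have hN : R2 <= xi * N%:R.
  have := archi_boundP (ltW (divr_gt0 R20 xi0)); rewrite -/N.
  by rewrite ltr_pdivrMr // mulrC => /ltW.
clearbody N.
have B12 k : inBall xi R1 k -> inBall xi R2 k.
  rewrite /inBall => h; apply: (lt_le_trans h); rewrite !expr2; nra.
pose F := undup (box d N.+1).
have hF Rad : 0 < Rad -> Rad <= xi * N%:R -> forall x, inBall xi Rad x ->
    [/\ x \in F, forall i, x + evec i \in F & forall i, x - evec i \in F].
  move=> Ra RN x hx; have hb := ball_box xi0 Ra RN hx.
  rewrite /F; split.
  - by rewrite mem_undup; apply: in_box => j; have := hb j; lia.
  - by move=> i; rewrite mem_undup; apply: in_box; case: (box_nbr i hb).
  - by move=> i; rewrite mem_undup; apply: in_box; case: (box_nbr i hb).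
have uF : uniq F by exact: undup_uniq.
have [u1 S1] := sol_of_topple d0 xi0 uF (hF _ R10 (le_trans R1le hN)) ex1 l1.
have [u2 S2] := sol_of_topple d0 xi0 uF (hF _ R20 hN) ex2 l2.
have [u3 S3] := sol_of_topple d0 xi0 uF (hF _ R20 hN) ex3 l3.
case: S1 => [a1 b1 c1 d1 e1]; case: S2 => [a2 b2 c2 d2' e2].
have S12 : Sol (inBall xi R2) sigma (fun z => u1 z + u2 z) eta2.
  split.
  - by move=> x; apply: addr_ge0.
  - move=> x hx; rewrite b2 // b1 ?addr0 // => h; apply: hx; exact: B12.
  - move=> y; rewrite c2 c1 -addrA; congr (_ + _).
    have -> : (fun z => u1 z + u2 z) = (fun z => u1 z + 1 * u2 z).
      by apply: funext => z; rewrite mul1r.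
    by rewrite Lop_lin mul1r.
  - exact: d2'.
  - move=> x hx; case: (ltP 0 (u2 x)) => h2; first exact: e2.
    have u20 : u2 x = 0 by apply/eqP; rewrite eq_le h2 a2.
    have hu1 : 0 < u1 x by move: hx; rewrite u20 addr0.
    rewrite c2; apply: addr_ge0; first exact: e1.
    by apply: Lop_ge0_min => z; rewrite u20.
have i0 : 'I_d := Ordinal d0.
have hW x : exists n, ~ inBall xi R2 (iter n (fun z => z + evec i0) x).
  exists (absz (x 0 i0) + N).+1 => hb.
  have := ball_box xi0 R20 hN hb i0; rewrite iter_coord; move: (x 0 i0) => a; lia.
have hB x : inBall xi R2 x -> x \in box d N.
  move=> hx; apply: in_box; exact: ball_box xi0 R20 hN hx.
have e12 x : u1 x + u2 x = u3 x.
  apply/eqP; rewrite eq_le; apply/andP; split.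
    exact: (sol_uniq hB hW S12 S3).
  exact: (sol_uniq hB hW S3 S12).
case: S12 => _ _ c12 _ _; case: S3 => _ _ c3 _ _.
apply: funext => y; rewrite c12 c3; congr (_ + Lop _ _).
exact: funext.
Qed.
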